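(* For any integer $n\geq 4$, we have $\chi(\overline{K}(n,2))\leq h_o(\overline{K}(n,2))$, and $\overline{K}(n,2)$ contains a strongly $1$-shallow $K_t$-minor, where $t=n-1=\chi(\overline{K}(n,2))$ when $n$ is even and $t=n=\chi(\overline{K}(n,2))$ when $n$ is odd.
   Context: $\overline{K}(n,k)$ is the complement of the Kneser graph: its vertices are the $k$-element subsets of $[n]=\{1,\dots,n\}$, two distinct ones adjacent iff they intersect. $\chi$ is chromatic number. A $K_t$-minor of a graph $G$ is given by $t$ pairwise vertex-disjoint connected subgraphs (bags), any two joined by an edge of $G$. A star is $K_{1,s}$, $s\ge1$. A $K_t$-minor is strongly $1$-shallow if each bag is a single vertex or a star, and every two bags are joined by an edge each of whose endpoints is either the unique vertex of a single-vertex bag or a leaf of a star bag. Signed graphs: $(G,\sigma)$ with $\sigma:E(G)\to\{+,-\}$; switching at $x$ flips signs of edges at $x$. $(H,\pi)$ is a minor of $(G,\sigma)$ if for some $\tau$ switching equivalent to $\sigma$ there are disjoint subgraphs $B_x$ ($x\in V(H)$) whose $\tau$-positive edges span each $B_x$ connectedly, and for each edge $xy$ of $H$ an edge $uv$ with $u\in B_x,v\in B_y$ and $\tau(uv)=\pi(xy)$. $h_o(G)$ is the largest $t$ such that $(K_t,-)$ (all edges negative) is a minor of $(G,-)$. *)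

(* Defs.v *)
From mathcomp Require Import all_boot.
Set Implicit Arguments. Unset Strict Implicit. Unset Printing Implicit Defensive.

Definition kset (n k : nat) := {A : {set 'I_n} | #|A| == k}.

Definition kneserC_rel (n k : nat) : rel (kset n k) :=
  fun A B => (A != B) && (val A :&: val B != set0).

Definition colorable (T : finType) (e : rel T) (k : nat) : Prop :=
  exists f : T -> 'I_k, forall x y, e x y -> f x != f y.

Definition is_chromatic_number (T : finType) (e : rel T) (k : nat) : Prop :=
  colorable e k /\ forall j, colorable e j -> k <= j.

(* ---- Signed graphs: signature sigma (true = positive, false = negative) ---- *)
(* switching at the vertex set X flips the sign of each edge with exactly one end in X;
   any signature switching equivalent to sigma is of the form (switch X sigma). *)
Definition switch (T : finType) (X : {set T}) (sigma : T -> T -> bool) : T -> T -> bool :=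
  fun u v => sigma u v (+) ((u \in X) (+) (v \in X)).

Definition all_negative (T : Type) : T -> T -> bool := fun _ _ => false.

Definition pos_connected (T : finType) (e : rel T) (tau : T -> T -> bool) (B : {set T}) :=
  (B != set0) /\
  forall x y, x \in B -> y \in B ->
    connect [rel u v | [&& u \in B, v \in B, e u v & tau u v]] x y.

Definition neg_clique_minor (T : finType) (e : rel T) (sigma : T -> T -> bool) (t : nat) : Prop :=
  exists (X : {set T}) (B : 'I_t -> {set T}),
    let tau := switch X sigma in
    [/\ forall i j, i != j -> [disjoint B i & B j],
        forall i, pos_connected e tau (B i) &
        forall i j, i != j ->
          exists u v, [/\ u \in B i, v \in B j, e u v & tau u v = false]].

Definition is_odd_hadwiger (T : finType) (e : rel T) (h : nat) : Prop :=
  neg_clique_minor e (@all_negative T) h /\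
  forall t, neg_clique_minor e (@all_negative T) t -> t <= h.

(* Bag i has centre c i and leaf set L i.  If L i is empty the bag is the single
   vertex c i; otherwise it is the star K_{1,|L i|} with centre c i and leaves L i. *)
Definition bag_vertices (T : finType) (c : T) (L : {set T}) : {set T} := c |: L.
Definition attach (T : finType) (c : T) (L : {set T}) : {set T} :=
  if L == set0 then [set c] else L.

Definition strongly_1_shallow_clique_minor (T : finType) (e : rel T) (t : nat) : Prop :=
  exists (c : 'I_t -> T) (L : 'I_t -> {set T}),
  [/\ forall i, c i \notin L i,
      forall i l, l \in L i -> e (c i) l,
      forall i j, i != j -> [disjoint bag_vertices (c i) (L i) & bag_vertices (c j) (L j)] &
      forall i j, i != j ->
        exists u v, [/\ u \in attach (c i) (L i), v \in attach (c j) (L j) & e u v]].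

(* Main.v *)
Require Import Defs.
From mathcomp Require Import all_boot.
From Stdlib Require Import Classical.
From mathcomp Require Import zify.
Set Implicit Arguments. Unset Strict Implicit. Unset Printing Implicit Defensive.

Lemma s1_to_neg (T : finType) (e : rel T) (t : nat) :
  symmetric e -> strongly_1_shallow_clique_minor e t ->
  neg_clique_minor e (@all_negative T) t.
Proof.
move=> esym [c [L [cL eL dis con]]].
pose X := [set x | [exists i, (L i != set0) && (x == c i)]].
have leafX : forall j l, l \in L j -> l \notin X.
  move=> j l lL; rewrite inE; apply/existsP => [[i /andP [_ /eqP li]]].
  have [ij|ij] := eqVneq i j.
    by move: lL; rewrite li -ij (negbTE (cL i)).
  have hb : c i \in bag_vertices (c i) (L i) by rewrite !inE eqxx.
  by move: (disjointFr (dis i j ij) hb); rewrite /bag_vertices !inE -li lL orbT.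
have cX : forall j, (c j \in X) = (L j != set0).
  move=> j; rewrite inE; apply/existsP/idP => [[i /andP [Li /eqP ci]]|Lj].
    have [ij|ij] := eqVneq i j; first by rewrite -ij.
    case: eqP => // Lj0.
    have hb : c i \in bag_vertices (c i) (L i) by rewrite !inE eqxx.
    by move: (disjointFr (dis i j ij) hb); rewrite /bag_vertices !inE -ci eqxx.
  by exists j; rewrite Lj eqxx.
have attX : forall j u, u \in attach (c j) (L j) -> u \notin X.
  move=> j u; rewrite /attach; case: eqP => [Lj|_]; last exact: leafX.
  by rewrite inE => /eqP ->; rewrite cX Lj eqxx.
have attB : forall j u, u \in attach (c j) (L j) -> u \in bag_vertices (c j) (L j).
  move=> j u; rewrite /attach /bag_vertices; case: eqP => _.
    by rewrite !inE => ->.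
  by rewrite !inE => ->; rewrite orbT.
exists X, (fun i => bag_vertices (c i) (L i)); split => //.
- move=> i; split.
    by apply/set0Pn; exists (c i); rewrite !inE eqxx.
  set r := [rel _ _ | _].
  have hc : forall x, x \in bag_vertices (c i) (L i) ->
      connect r (c i) x /\ connect r x (c i).
    move=> x; rewrite /bag_vertices !inE => /orP [/eqP ->|xL].
      by split; apply: connect0.
    have cx : (c i \in X) = true by rewrite cX; apply/set0Pn; exists x.
    have xX := leafX _ _ xL.
    have bc : c i \in bag_vertices (c i) (L i) by rewrite !inE eqxx.
    have bx : x \in bag_vertices (c i) (L i) by rewrite !inE xL orbT.
    split; apply: connect1; rewrite /= bc bx /switch /all_negative cx (negbTE xX) /=.
      by rewrite eL.
    by rewrite esym eL.
  move=> x y /hc [_ h1] /hc [h2 _]; exact: connect_trans h1 h2.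
- move=> i j ij; have [u [v [hu hv huv]]] := con i j ij.
  exists u, v; split; [exact: attB hu|exact: attB hv|exact: huv|].
  by rewrite /switch /all_negative (negbTE (attX _ _ hu)) (negbTE (attX _ _ hv)).
Qed.

Lemma neg_bound (T : finType) (e : rel T) sigma t :
  neg_clique_minor e sigma t -> t <= #|T|.
Proof.
case: t => // t [X [B [dis pc _]]].
have [x0 _] : exists x0, x0 \in B ord0 by case: (pc ord0) => /set0Pn.
pose f i := odflt x0 [pick x in B i].
have fB : forall i, f i \in B i.
  move=> i; rewrite /f; case: pickP => //= h.
  by case: (pc i) => /set0Pn [x]; rewrite h.
have finj : injective f.
  move=> i j fij; apply/eqP; apply: contraT => ij.
  by move: (disjointFr (dis i j ij) (fB i)); rewrite fij fB.
by move: (leq_card f finj); rewrite card_ord.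
Qed.

Lemma max_exists (P : nat -> Prop) (N a : nat) :
  P a -> (forall t, P t -> t <= N) -> exists h, [/\ P h, a <= h & forall t, P t -> t <= h].
Proof.
move=> Pa bnd.
suff H : forall k a, P a -> N - a <= k ->
  exists h, [/\ P h, a <= h & forall t, P t -> t <= h] by exact: H (N - a) a Pa (leqnn _).
elim => [|k IH] {}a {}Pa hk.
  exists a; split => // t Pt; have := bnd t Pt; have := bnd a Pa; lia.
have [[t [Pt lat]]|nt] := classic (exists t, P t /\ a < t).
  have [h [Ph th hmax]] := IH t Pt (ltac:(have := bnd t Pt; lia)).
  exists h; split => //; lia.
exists a; split => // t Pt; rewrite leqNgt; apply/negP => lat.
by apply: nt; exists t.
Qed.

Definition Gc (n p q : nat) :=
  if odd n then p + q
  else if (p == n - 1) || (q == n - 1) then 2 * (p + q - (n - 1)) else p + q.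

Lemma mod_small_eq m a b : a < m -> b < m -> (a == b %[mod m]) = (a == b).
Proof. by move=> ha hb; rewrite !modn_small. Qed.

Lemma dbl_mod m a b : odd m -> a < m -> b < m -> (2 * a == 2 * b %[mod m]) -> a = b.
Proof.
move=> om.
wlog ab : a b / a <= b.
  move=> H ha hb hab; case: (leqP a b) => [h|h]; first exact: H.
  by apply/esym/H => //; [exact: ltnW | rewrite eq_sym].
move=> ha hb; rewrite eq_sym eqn_mod_dvd ?leq_mul2l ?ab ?orbT // -mulnBr.
rewrite Gauss_dvdr ?coprimen2 // => hd.
have : b - a = 0.
  case: (posnP (b - a)) => // hp; have := dvdn_leq hp hd; lia.
lia.
Qed.

Lemma Gc_ok n x a b : 3 < n -> x < n -> a < n -> b < n ->
  a != x -> b != x -> a != b ->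
  Gc n x a %% (if odd n then n else n - 1) != Gc n x b %% (if odd n then n else n - 1).
Proof.
move=> hn hx ha hb ax bx ab; rewrite /Gc.
case on: (odd n).
  by apply/negP; rewrite eqn_modDl mod_small_eq //; apply/negP.
have om : odd (n - 1) by rewrite oddB ?on //; lia.
set m := n - 1.
have [xm|xm] := eqVneq x m.
  rewrite /=; apply/negP => h.
  have am : a < m by lia.
  have bm : b < m by lia.
  have : a = b.
    apply: (dbl_mod om am bm); move: h.
    have -> : x + a - m = a by lia.
    by have -> : x + b - m = b by lia.
  by move/eqP; rewrite (negbTE ab).
rewrite /=.
have xm' : x < m by lia.
have [am|am] := eqVneq a m; have [bm|bm] := eqVneq b m.
- by move: ab; rewrite am bm eqxx.
- apply/negP; have -> : x + a - m = x by lia.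
  rewrite mul2n -addnn eqn_modDl mod_small_eq //; last by lia.
  by rewrite eq_sym (negbTE bx).
- apply/negP; have -> : x + b - m = x by lia.
  rewrite mul2n -addnn eqn_modDl mod_small_eq //; last by lia.
  by rewrite (negbTE ax).
- by apply/negP; rewrite eqn_modDl mod_small_eq //; lia.
Qed.

Section Kn.
Variable n : nat.
Hypothesis hn : 3 < n.

Lemma pair_dec (A : {set 'I_n}) x : #|A| = 2 -> x \in A ->
  exists a, a != x /\ A = [set x; a].
Proof.
move=> cA xA.
have : #|A :\ x| == 1 by move: cA; rewrite (cardsD1 x) xA add1n => -[->].
move/cards1P => [a ha]; exists a; split.
  have : a \in A :\ x by rewrite ha set11.
  by rewrite !inE => /andP [].
by rewrite -(setD1K xA) ha.
Qed.

Lemma sum_pair (x a : 'I_n) : a != x -> \sum_(i in [set x; a]) (i : nat) = x + a.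
Proof.
move=> ax; rewrite big_setU1 ?big_set1 // inE eq_sym //.
Qed.

Definition tn := if odd n then n else n - 1.
Lemma tpos : 0 < tn. Proof. rewrite /tn; case: ifP => _; lia. Qed.

Definition sumA (A : kset n 2) := \sum_(i in val A) (i : nat).
Definition gA (A : kset n 2) :=
  if odd n then sumA A
  else if [exists i in val A, val i == n - 1] then 2 * (sumA A - (n - 1)) else sumA A.
Definition colA (A : kset n 2) : 'I_tn := Ordinal (ltn_pmod (gA A) tpos).

Lemma colA_proper : forall A B, kneserC_rel A B -> colA A != colA B.
Proof.
move=> A B /andP [AB /set0Pn [x]]; rewrite inE => /andP [xA xB].
have [a [ax eA]] := pair_dec (eqP (valP A)) xA.
have [b [bx eB]] := pair_dec (eqP (valP B)) xB.
have ab : a != b.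
  apply: contraNneq AB => ab; apply/eqP/val_inj; by rewrite eA eB ab.
have ex : forall y : 'I_n, y != x ->
    [exists i in [set x; y], val i == n - 1] = (val x == n - 1) || (val y == n - 1).
  move=> y _; apply/existsP/orP => [[i]|[h|h]].
    by rewrite !inE => /andP [/orP [] /eqP -> ->]; [left|right].
  by exists x; rewrite !inE eqxx h.
  by exists y; rewrite !inE eqxx orbT h.
have := Gc_ok hn (ltn_ord x) (ltn_ord a) (ltn_ord b) ax bx ab.
by rewrite /colA /gA /sumA -val_eqE /= eA eB !sum_pair // !ex // /Gc /tn.
Qed.

Lemma class_bound j (f : kset n 2 -> 'I_j) :
  (forall A B, kneserC_rel A B -> f A != f B) ->
  forall c, 2 * #|[set A | f A == c]| <= n.
Proof.
move=> fp c; set C := [set A | f A == c].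
pose P := [set val A | A in C].
have tP : trivIset P.
  apply/trivIsetP => U V /imsetP [A AC ->] /imsetP [B BC ->] UV.
  rewrite -setI_eq0; apply/negPn/negP => h.
  have AB : A != B by apply: contraNneq UV => ->.
  have := fp A B; rewrite /kneserC_rel AB h.
  by move: AC BC; rewrite !inE => /eqP -> /eqP ->; rewrite eqxx => /(_ isT).
have s : \sum_(U in P) #|U| = #|cover P| := eqP tP.
have s2 : \sum_(U in P) #|U| = 2 * #|C|.
  rewrite (eq_bigr (fun _ => 2)).
    rewrite sum_nat_const card_imset; first exact: mulnC.
    exact: val_inj.
  by move=> U /imsetP [A _ ->]; exact: (eqP (valP A)).
have := max_card (mem (cover P)); rewrite card_ord -s s2 => h.
exact: h.
Qed.

Lemma card_kset : #|{: kset n 2}| = 'C(n, 2).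
Proof.
rewrite card_sig -[X in 'C(X, _)]card_ord -card_draws; apply: eq_card => A; by rewrite !inE.
Qed.

Lemma chi_lower j : colorable (@kneserC_rel n 2) j -> tn <= j.
Proof.
move=> [f fp].
have sum : #|{: kset n 2}| = \sum_(c < j) #|[set A | f A == c]|.
  rewrite -sum1_card (partition_big f xpredT) //=; apply: eq_bigr => c _.
  by rewrite -sum1_card; apply: eq_bigl => A; rewrite inE.
pose b := if odd n then n - 1 else n.
have hb : forall c, 2 * #|[set A | f A == c]| <= b.
  move=> c; have := class_bound fp c; rewrite /b; case on: (odd n) => // h.
  have : 2 * #|[set A | f A == c]| != n.
    by apply/eqP => e; move: on; rewrite -e oddM.
  lia.
have : 2 * 'C(n, 2) <= j * b.
  rewrite -card_kset sum big_distrr /=.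
  apply: (@leq_trans (\sum_(i < j) b)); first exact: leq_sum (fun c _ => hb c).
  by rewrite sum_nat_const card_ord.
have -> : 2 * 'C(n, 2) = n * (n - 1).
  by rewrite -(mul_bin_diag n 1) bin1 subn1.
have p1 : 0 < n - 1 by lia.
have p0 : 0 < n by lia.
rewrite /tn /b; case: (odd n) => h.
  by rewrite leq_pmul2r in h.
by rewrite [j * n]mulnC leq_pmul2l in h.
Qed.
End Kn.

Section Cons.
Variable n : nat.
Hypothesis hn : 3 < n.

Definition o0 : 'I_n := Ordinal (ltn_trans (isT : 0 < 3) hn).
Definition ord k : 'I_n := insubd o0 k.
Lemma ordE k : k < n -> val (ord k) = k.
Proof. by move=> h; rewrite val_insubd h. Qed.
Lemma ord_eq k l : k < n -> l < n -> (ord k == ord l) = (k == l).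
Proof. by move=> hk hl; rewrite -val_eqE /= !ordE. Qed.

Lemma P12p : #|[set ord 1; ord 2]| == 2.
Proof. rewrite cards2 ord_eq //; lia. Qed.
Definition P12 : kset n 2 := exist (fun A : {set 'I_n} => #|A| == 2) _ P12p.
Definition mk (a b : 'I_n) : kset n 2 := insubd P12 [set a; b].
Lemma mem_mk a b x : a != b -> (x \in val (mk a b)) = (x == a) || (x == b).
Proof. by move=> ab; rewrite val_insubd cards2 ab !inE. Qed.
Lemma mem_P12 x : (x \in val P12) = (x == ord 1) || (x == ord 2).
Proof. by rewrite /= !inE. Qed.

Lemma neq_by (A B : kset n 2) x : x \in val A -> x \notin val B -> A != B.
Proof. by move=> xA; apply: contra => /eqP <-. Qed.
Lemma meet (A B : kset n 2) x : x \in val A -> x \in val B -> val A :&: val B != set0.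
Proof. by move=> xA xB; apply/set0Pn; exists x; rewrite inE xA xB. Qed.
Lemma adj_by (A B : kset n 2) x y :
  y \in val A -> y \notin val B -> x \in val A -> x \in val B -> kneserC_rel A B.
Proof. by move=> yA yB xA xB; rewrite /kneserC_rel (neq_by yA yB) (meet xA xB). Qed.

Variable t : nat.
Hypothesis ht : t <= n.

Definition Lset := [set A : kset n 2 |
  [&& A != P12, val A :&: val P12 != set0 & ord 0 \notin val A]].
Definition cc (i : 'I_t) := if (i : nat) == 0 then P12 else mk (ord 0) (ord i).
Definition LL (i : 'I_t) := if (i : nat) == 0 then Lset else set0.

Lemma iltn (i : 'I_t) : i < n.
Proof. exact: leq_trans (ltn_ord i) ht. Qed.

Lemma mem_cc (i : 'I_t) x : (i : nat) != 0 ->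
  (x \in val (cc i)) = (x == ord 0) || (x == ord i).
Proof.
move=> i0; rewrite /cc (negbTE i0) mem_mk // ord_eq ?iltn //; [by rewrite eq_sym | lia].
Qed.


Lemma hs : [/\ 0 < n, 1 < n, 2 < n & 3 < n].
Proof. split; lia. Qed.

Lemma cc_notP12 (i : 'I_t) : (i : nat) != 0 -> cc i != P12.
Proof.
move=> i0; have [? ? ? ?] := hs; have := iltn i => ?.
apply: (@neq_by _ _ (ord 0)); rewrite ?mem_cc ?mem_P12 ?eqxx // !ord_eq //.
Qed.

Lemma cc_notL (i : 'I_t) : (i : nat) != 0 -> cc i \notin Lset.
Proof.
move=> i0; rewrite inE mem_cc // eqxx /=.
by rewrite !andbF.
Qed.

Lemma wit (j : 'I_t) : (j : nat) != 0 -> exists u, u \in Lset /\ kneserC_rel u (cc j).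
Proof.
move=> j0; have [? ? ? ?] := hs; have := iltn j => ?.
case h: (((j : nat) == 1) || ((j : nat) == 2)).
  have ne : ord j != ord 3 by rewrite ord_eq //; lia.
  exists (mk (ord j) (ord 3)); split.
    rewrite inE; apply/and3P; split.
    - apply: (@neq_by _ _ (ord 3)); rewrite ?mem_mk ?mem_P12 // !ord_eq //; lia.
    - apply: (@meet _ _ (ord j)); rewrite ?mem_mk ?mem_P12 // ?eqxx // !ord_eq //.
    - rewrite mem_mk // !ord_eq //; lia.
  apply: (@adj_by _ _ (ord j) (ord 3)); rewrite ?mem_mk ?mem_cc // ?eqxx ?orbT // !ord_eq //; lia.
have ne : ord 1 != ord j by rewrite ord_eq //; lia.
exists (mk (ord 1) (ord j)); split.
  rewrite inE; apply/and3P; split.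
  - apply: (@neq_by _ _ (ord j)); rewrite ?mem_mk ?mem_P12 ?eqxx ?orbT // !ord_eq //; lia.
  - apply: (@meet _ _ (ord 1)); rewrite ?mem_mk ?mem_P12 // ?eqxx // !ord_eq //.
  - rewrite mem_mk // !ord_eq //; lia.
apply: (@adj_by _ _ (ord j) (ord 1)); rewrite ?mem_mk ?mem_cc // ?eqxx ?orbT // !ord_eq //; lia.
Qed.

Lemma shallow : strongly_1_shallow_clique_minor (@kneserC_rel n 2) t.
Proof.
have [? ? ? ?] := hs.
have Lne : forall (j : 'I_t), (j : nat) != 0 -> Lset != set0.
  by move=> j j0; have [u [uL _]] := wit j0; apply/set0Pn; exists u.
exists cc, LL; split.
- move=> i; rewrite /LL /cc; case: eqP => _; last by rewrite inE.
  by rewrite inE eqxx.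
- move=> i l; rewrite /LL /cc; case: eqP => _; last by rewrite inE.
  by rewrite inE => /and3P [h1 h2 _]; rewrite /kneserC_rel eq_sym h1 setIC h2.
- move=> i j ij; rewrite /bag_vertices /LL.
  case: (eqVneq (i : nat) 0) => i0; case: (eqVneq (j : nat) 0) => j0.
  + by move: ij; rewrite -val_eqE /= i0 j0.
  + have -> : cc i = P12 by rewrite /cc i0.
    rewrite disjoint_sym setU0 disjoints1 in_setU1 negb_or.
    by rewrite (cc_notP12 j0) (cc_notL j0).
  + have -> : cc j = P12 by rewrite /cc j0.
    rewrite setU0 disjoints1 in_setU1 negb_or.
    by rewrite (cc_notP12 i0) (cc_notL i0).
  + rewrite !setU0 disjoints1 inE.
    have := iltn i; have := iltn j => ? ?.
    apply: (@neq_by _ _ (ord i)); rewrite ?mem_cc // ?eqxx ?orbT // !ord_eq //.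
    by move: ij; rewrite -val_eqE /=; lia.
- move=> i j ij; rewrite /attach /LL.
  case: (eqVneq (i : nat) 0) => i0; case: (eqVneq (j : nat) 0) => j0.
  + by move: ij; rewrite -val_eqE /= i0 j0.
  + have [u [uL hu]] := wit j0.
    exists u, (cc j); rewrite (negbTE (Lne j j0)) eqxx /= set11; split => //.
  + have [u [uL hu]] := wit i0.
    exists (cc i), u; rewrite (negbTE (Lne i i0)) eqxx /= set11; split => //.
    have symm : symmetric (@kneserC_rel n 2).
      by move=> A B; rewrite /kneserC_rel eq_sym setIC.
    by rewrite symm.
  + rewrite eqxx; exists (cc i), (cc j); rewrite !set11; split => //.
    have := iltn i; have := iltn j => ? ?.
    apply: (@adj_by _ _ (ord 0) (ord i)); rewrite ?mem_cc // ?eqxx ?orbT // !ord_eq //.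
    by move: ij; rewrite -val_eqE /=; lia.
Qed.
End Cons.

Theorem lemma2p3 (n : nat) : 4 <= n ->
  let t := if odd n then n else n - 1 in
  [/\ is_chromatic_number (@kneserC_rel n 2) t,
      (exists h, is_odd_hadwiger (@kneserC_rel n 2) h /\ t <= h) &
      strongly_1_shallow_clique_minor (@kneserC_rel n 2) t].
Proof.
move=> hn t.
have ht : t <= n by rewrite /t; case: (odd n); lia.
have sh := shallow hn ht.
have symm : symmetric (@kneserC_rel n 2).
  by move=> A B; rewrite /kneserC_rel eq_sym setIC.
split => //.
- split; first by exists (@colA n hn); exact: colA_proper.
  by move=> j; exact: chi_lower hn j.
- have [h [Ph th hmax]] := max_exists (N := #|{: kset n 2}|) (s1_to_neg symm sh)
    (fun t' Pt => neg_bound Pt).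
  by exists h.
Qed.
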